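(* Let $\mathcal{H}=\mathbb{C}^d$ with orthonormal classical basis $\{|0\rangle,\dots,|d-1\rangle\}$, and let $U_{CD}$ be the unitary on $\mathbb{C}^d\otimes\mathbb{C}^d$ given by $U_{CD}|i,j\rangle=|i,\,j\oplus_d i\rangle$ (so $U_{CD}|i\rangle|0\rangle=|i\rangle|i\rangle$). For every density matrix $\rho$ on $\mathbb{C}^d$, the output $\rho'=U_{CD}(\rho\otimes|0\rangle\langle0|)U_{CD}^\dagger$ satisfies $S_N(\rho')=N_S(\rho)$. In particular $\rho'$ is entangled if and only if $\rho$ is nonclassical, and if $\hat M$ is a Hermitian operator on $\mathbb{C}^d$ with $\mathrm{Tr}(\hat M\rho)>\max_i\langle i|\hat M|i\rangle$, then $\rho'$ is entangled.
   Context: $\oplus_d$ denotes addition modulo $d$. The superposition number $r(\psi)$ of a pure state $|\psi\rangle=\sum_i c_i|i\rangle$ is the number of nonzero coefficients $c_i$; for a mixed state, $N_S(\rho)=\inf\{\sup_i r(\psi_i):\rho=\sum_ip_i|\psi_i\rangle\langle\psi_i|\}$, the infimum over all decompositions of $\rho$ into pure states with $p_i>0$. The Schmidt rank $r(\Psi)$ of a pure bipartite state is the number of nonzero coefficients in its Schmidt decomposition, and the Schmidt number of a bipartite mixed state is $S_N(\rho)=\inf\{\sup_i r(\Psi_i):\rho=\sum_ip_i|\Psi_i\rangle\langle\Psi_i|\}$. Classical single-system states are those with $N_S=1$ (convex combinations of the $|i\rangle\langle i|$); a bipartite state is entangled iff its Schmidt number exceeds 1. *)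

(* Defs.v *)
(* Complex scalars: an arbitrary numClosedFieldType C
   (algebraically closed field with conjugation and the induced partial order,
   e.g. algC; the statement is proved uniformly for all such C). *)
From HB Require Import structures.
From mathcomp Require Import all_boot all_order all_algebra.
Set Implicit Arguments. Unset Strict Implicit. Unset Printing Implicit Defensive.
Import Order.TTheory GRing.Theory Num.Theory.
Local Open Scope ring_scope.

Section Quantum.
Variable C : numClosedFieldType.

Definition dag m n (A : 'M[C]_(m, n)) : 'M[C]_(n, m) := map_mx Num.conj A^T.

(* decoding of a product index a : 'I_(m*n) into the pair (i, j) with
   a = mxvec_index i j *)
Definition unpair m n (a : 'I_(m * n)) : 'I_m * 'I_n :=
  enum_val (cast_ord (esym (mxvec_cast m n)) a).

(* Kronecker (tensor) product; basis |i,j> of C^m (x) C^n is index mxvec_index i j *)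
Definition kron m1 n1 m2 n2 (A : 'M[C]_(m1, n1)) (B : 'M[C]_(m2, n2))
  : 'M[C]_(m1 * m2, n1 * n2) :=
  \matrix_(a, b) (A (unpair a).1 (unpair b).1 * B (unpair a).2 (unpair b).2).

Definition ket n (i : 'I_n) : 'cV[C]_n := delta_mx i 0.

Definition is_hermitian n (A : 'M[C]_n) : Prop := dag A = A.

Definition psd n (A : 'M[C]_n) : Prop :=
  is_hermitian A /\ forall v : 'cV[C]_n, 0 <= (dag v *m A *m v) 0 0.

Definition density n (rho : 'M[C]_n) : Prop := psd rho /\ \tr rho = 1.

Definition unit_vec n (v : 'cV[C]_n) : Prop := (dag v *m v) 0 0 = 1.

Definition sup_number n (v : 'cV[C]_n) : nat := #|[set i | v i 0 != 0]|.

Definition pure_decomp_with n (P : 'cV[C]_n -> Prop) (rho : 'M[C]_n) : Prop :=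
  exists (N : nat) (p : 'I_N -> C) (psi : 'I_N -> 'cV[C]_n),
    [/\ forall k, 0 < p k,
        forall k, unit_vec (psi k),
        forall k, P (psi k) &
        rho = \sum_(k < N) p k *: (psi k *m dag (psi k))].

Definition sup_number_le n (rho : 'M[C]_n) (k : nat) : Prop :=
  pure_decomp_with (fun v => (sup_number v <= k)%N) rho.

(* N_S(rho) = k : k is the infimum over decompositions of the sup of r(psi_i) *)
Definition is_NS n (rho : 'M[C]_n) (k : nat) : Prop :=
  sup_number_le rho k /\ forall m, sup_number_le rho m -> (k <= m)%N.

Definition orthonormal n r (u : 'I_r -> 'cV[C]_n) : Prop :=
  forall k l, (dag (u k) *m u l) 0 0 = (k == l)%:R.

Definition schmidt_decomp d (Psi : 'cV[C]_(d * d)) (r : nat) : Prop :=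
  exists (lam : 'I_r -> C) (u v : 'I_r -> 'cV[C]_d),
    [/\ forall k, 0 < lam k, orthonormal u, orthonormal v &
        Psi = \sum_(k < r) lam k *: kron (u k) (v k)].

Definition schmidt_rank_le d (Psi : 'cV[C]_(d * d)) (k : nat) : Prop :=
  exists r, (r <= k)%N /\ schmidt_decomp Psi r.

Definition schmidt_number_le d (rho : 'M[C]_(d * d)) (k : nat) : Prop :=
  pure_decomp_with (fun Psi => schmidt_rank_le Psi k) rho.

Definition is_SN d (rho : 'M[C]_(d * d)) (k : nat) : Prop :=
  schmidt_number_le rho k /\ forall m, schmidt_number_le rho m -> (k <= m)%N.

Definition entangled d (rho : 'M[C]_(d * d)) : Prop := ~ schmidt_number_le rho 1.

Definition nonclassical n (rho : 'M[C]_n) : Prop := ~ sup_number_le rho 1.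

Definition addmod d (hd : (0 < d)%N) (i j : 'I_d) : 'I_d :=
  Ordinal (ltn_pmod (i + j) hd).

Definition ord0' d (hd : (0 < d)%N) : 'I_d := Ordinal hd.

Definition Ucd d (hd : (0 < d)%N) : 'M[C]_(d * d) :=
  \sum_(i < d) \sum_(j < d)
     kron (ket i) (ket (addmod hd j i)) *m dag (kron (ket i) (ket j)).

Definition output d (hd : (0 < d)%N) (rho : 'M[C]_d) : 'M[C]_(d * d) :=
  Ucd hd *m kron rho (ket (ord0' hd) *m dag (ket (ord0' hd))) *m dag (Ucd hd).

End Quantum.

(* Main.v *)
Require Import Defs.
From HB Require Import structures.
From mathcomp Require Import all_boot all_order all_algebra.
Set Implicit Arguments. Unset Strict Implicit. Unset Printing Implicit Defensive.
Import Order.TTheory GRing.Theory Num.Theory.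
Local Open Scope ring_scope.

Section Work.
Variable C : numClosedFieldType.

Notation pr := (@mxvec_index _ _).

Lemma unpairK m n (i : 'I_m) (j : 'I_n) : unpair (pr i j) = (i, j).
Proof. by rewrite /unpair /mxvec_index cast_ordK enum_rankK. Qed.

Lemma unpairV m n (a : 'I_(m * n)) : pr (unpair a).1 (unpair a).2 = a.
Proof.
rewrite /unpair /mxvec_index.
by rewrite -[(_, _)]surjective_pairing enum_valK; apply: val_inj.
Qed.

Lemma eq_pr m n (a : 'I_(m * n)) i j : (a == pr i j) = (unpair a == (i, j)).
Proof.
apply/eqP/eqP => [->|H]; first by rewrite unpairK.
by rewrite -(unpairV a) H.
Qed.

Lemma pr_eq m n (i i' : 'I_m) (j j' : 'I_n) :
  (pr i j == pr i' j') = (i == i') && (j == j').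
Proof. by rewrite eq_pr unpairK xpair_eqE. Qed.

Lemma dagE m n (A : 'M[C]_(m, n)) i j : dag A i j = (A j i)^*.
Proof. by rewrite /dag !mxE. Qed.

Lemma dag_delta m n (i : 'I_m) (j : 'I_n) : dag (delta_mx i j : 'M[C]_(m,n)) = delta_mx j i.
Proof.
apply/matrixP => a b; rewrite dagE !mxE conjC_nat.
by rewrite andbC.
Qed.

Lemma dag_sum m n I (r : seq I) (P : pred I) (F : I -> 'M[C]_(m, n)) :
  dag (\sum_(k <- r | P k) F k) = \sum_(k <- r | P k) dag (F k).
Proof.
apply/matrixP => a b; rewrite dagE !summxE rmorph_sum.
by apply: eq_bigr => k _; rewrite dagE.
Qed.

Lemma dagZ m n c (A : 'M[C]_(m, n)) : dag (c *: A) = c^* *: dag A.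
Proof. by apply/matrixP => a b; rewrite dagE !mxE ?dagE rmorphM. Qed.

Lemma dagM m n p (A : 'M[C]_(m, n)) (B : 'M[C]_(n, p)) : dag (A *m B) = dag B *m dag A.
Proof.
apply/matrixP => a b; rewrite dagE !mxE rmorph_sum.
by apply: eq_bigr => k _; rewrite !dagE rmorphM mulrC.
Qed.

Lemma kronE m1 n1 m2 n2 (A : 'M[C]_(m1, n1)) (B : 'M[C]_(m2, n2)) i k j l :
  kron A B (pr i k) (pr j l) = A i j * B k l.
Proof. by rewrite /kron mxE !unpairK. Qed.

Lemma kron_delta m1 n1 m2 n2 (i : 'I_m1) (j : 'I_n1) (k : 'I_m2) (l : 'I_n2) :
  kron (delta_mx i j : 'M[C]_(m1,n1)) (delta_mx k l : 'M[C]_(m2,n2)) = delta_mx (pr i k) (pr j l).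
Proof.
apply/matrixP => a b; rewrite -(unpairV a) -(unpairV b) kronE !mxE !pr_eq.
by rewrite -natrM mulnb andbACA.
Qed.

Lemma kron_suml m1 n1 m2 n2 I (r : seq I) (P : pred I) (F : I -> 'M[C]_(m1, n1)) (B : 'M[C]_(m2,n2)) :
  kron (\sum_(k <- r | P k) F k) B = \sum_(k <- r | P k) kron (F k) B.
Proof.
apply/matrixP => a b; rewrite summxE /kron mxE summxE mulr_suml.
by apply: eq_bigr => k _; rewrite mxE.
Qed.

Lemma kron_sumr m1 n1 m2 n2 I (r : seq I) (P : pred I) (A : 'M[C]_(m1, n1)) (F : I -> 'M[C]_(m2,n2)) :
  kron A (\sum_(k <- r | P k) F k) = \sum_(k <- r | P k) kron A (F k).
Proof.
apply/matrixP => a b; rewrite summxE /kron mxE summxE mulr_sumr.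
by apply: eq_bigr => k _; rewrite mxE.
Qed.

Lemma kronZl m1 n1 m2 n2 c (A : 'M[C]_(m1, n1)) (B : 'M[C]_(m2,n2)) :
  kron (c *: A) B = c *: kron A B.
Proof. by apply/matrixP => a b; rewrite /kron !mxE mulrA. Qed.

Lemma kronZr m1 n1 m2 n2 c (A : 'M[C]_(m1, n1)) (B : 'M[C]_(m2,n2)) :
  kron A (c *: B) = c *: kron A B.
Proof. by apply/matrixP => a b; rewrite /kron !mxE mulrCA. Qed.

Lemma sum2_delta (V : nmodType) m n (F : 'I_m -> 'I_n -> V) i j :
  \sum_k \sum_l F k l *+ ((k == i) && (l == j)) = F i j.
Proof.
rewrite (bigD1 i) //= [X in _ + X]big1; last first.
  by move=> k /negbTE nk; apply: big1 => l _; rewrite nk mulr0n.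
rewrite addr0 (bigD1 j) //= !eqxx mulr1n [X in _ + X]big1 ?addr0 // => l /negbTE ->.
by rewrite andbF mulr0n.
Qed.

End Work.

Section Out.
Variable C : numClosedFieldType.
Variables (d : nat) (hd : (0 < d)%N).
Local Notation o := (ord0' hd).
Local Notation pr := (@mxvec_index _ _).

Lemma addmod0 i : addmod hd o i = i.
Proof. by apply: val_inj; rewrite /= add0n modn_small. Qed.

Lemma UcdE : Ucd C hd = \sum_(i < d) \sum_(j < d) delta_mx (pr i (addmod hd j i)) (pr i j).
Proof.
rewrite /Ucd; apply: eq_bigr => i _; apply: eq_bigr => j _.
by rewrite /ket !kron_delta dag_delta mul_delta_mx.
Qed.

Lemma dagUcdE : dag (Ucd C hd) = \sum_(i < d) \sum_(j < d) delta_mx (pr i j) (pr i (addmod hd j i)).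
Proof.
rewrite UcdE dag_sum; apply: eq_bigr => i _; rewrite dag_sum.
by apply: eq_bigr => j _; rewrite dag_delta.
Qed.

Lemma U_left n i (q : 'I_n) :
  Ucd C hd *m delta_mx (pr i o) q = delta_mx (pr i i) q.
Proof.
rewrite UcdE mulmx_suml.
transitivity (\sum_k \sum_l (delta_mx (pr k (addmod hd l k)) q : 'M[C]_(d*d,n)) *+ ((k == i) && (l == o))).
  apply: eq_bigr => k _; rewrite mulmx_suml; apply: eq_bigr => l _.
  by rewrite mul_delta_mx_cond pr_eq.
by rewrite (sum2_delta (fun k l => delta_mx (pr k (addmod hd l k)) q)) addmod0.
Qed.

Lemma U_right n (q : 'I_n) j :
  delta_mx q (pr j o) *m dag (Ucd C hd) = delta_mx q (pr j j).
Proof.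
rewrite dagUcdE mulmx_sumr.
transitivity (\sum_k \sum_l (delta_mx q (pr k (addmod hd l k)) : 'M[C]_(n,d*d)) *+ ((k == j) && (l == o))).
  apply: eq_bigr => k _; rewrite mulmx_sumr; apply: eq_bigr => l _.
  by rewrite mul_delta_mx_cond pr_eq (eq_sym j) (eq_sym o).
by rewrite (sum2_delta (fun k l => delta_mx q (pr k (addmod hd l k)))) addmod0.
Qed.

Lemma outputE (rho : 'M[C]_d) :
  output hd rho = \sum_(i < d) \sum_(j < d) rho i j *: delta_mx (pr i i) (pr j j).
Proof.
rewrite /output /ket dag_delta mul_delta_mx {1}(matrix_sum_delta rho).
rewrite kron_suml mulmx_sumr mulmx_suml; apply: eq_bigr => i _.
rewrite kron_suml mulmx_sumr mulmx_suml; apply: eq_bigr => j _.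
by rewrite kronZl kron_delta -scalemxAr -scalemxAl U_left U_right.
Qed.

End Out.

Section Emb.
Variable C : numClosedFieldType.
Variable d : nat.
Local Notation pr := (@mxvec_index _ _).

Lemma sum_delta_l n (F : 'I_n -> C) i : \sum_j (i == j)%:R * F j = F i.
Proof.
rewrite (bigD1 i) //= eqxx mul1r big1 ?addr0 // => j nj.
by rewrite eq_sym (negbTE nj) mul0r.
Qed.

Lemma sum_delta_r n (F : 'I_n -> C) i : \sum_j F j * (j == i)%:R = F i.
Proof.
rewrite (bigD1 i) //= eqxx mulr1 big1 ?addr0 // => j nj.
by rewrite (negbTE nj) mulr0.
Qed.

Definition emb (v : 'cV[C]_d) : 'cV[C]_(d * d) :=
  \sum_(i < d) v i 0 *: delta_mx (pr i i) 0.

Lemma emb_pr v x y : emb v (pr x y) 0 = if x == y then v x 0 else 0.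
Proof.
rewrite summxE.
under eq_bigr => i _ do rewrite !mxE pr_eq eqxx andbT.
case: eqP => [<-|nxy].
  rewrite (bigD1 x) //= eqxx mulr1 big1 ?addr0 // => i ni.
  by rewrite eq_sym (negbTE ni) mulr0.
apply: big1 => i _; case: (x =P i) => [ei|]; last by rewrite mulr0.
by case: (y =P i) => [ey|]; [case: nxy; rewrite ei ey | rewrite andbF mulr0].
Qed.

Lemma emb_entry v a :
  emb v a 0 = if (unpair a).1 == (unpair a).2 then v (unpair a).1 0 else 0.
Proof. by rewrite -{1}(unpairV a) emb_pr. Qed.

Lemma dag_emb v : dag (emb v) = \sum_(j < d) (v j 0)^* *: delta_mx 0 (pr j j).
Proof. by rewrite dag_sum; apply: eq_bigr => j _; rewrite dagZ dag_delta. Qed.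

Lemma emb_outer v :
  emb v *m dag (emb v) = \sum_(i < d) \sum_(j < d) (v i 0 * (v j 0)^*) *: delta_mx (pr i i) (pr j j).
Proof.
rewrite dag_emb mulmx_suml; apply: eq_bigr => i _.
rewrite mulmx_sumr; apply: eq_bigr => j _.
by rewrite -scalemxAl -scalemxAr mul_delta_mx scalerA.
Qed.

Lemma dagvv n (v : 'cV[C]_n) : (dag v *m v) 0 0 = \sum_i (v i 0)^* * v i 0.
Proof. by rewrite mxE; apply: eq_bigr => i _; rewrite dagE. Qed.

Lemma emb_unit v : (dag (emb v) *m emb v) 0 0 = (dag v *m v) 0 0.
Proof.
rewrite [RHS]dagvv dag_emb mulmx_suml summxE; apply: eq_bigr => i _.
rewrite /emb mulmx_sumr summxE.
transitivity (\sum_j ((v i 0)^* * v j 0) * (j == i)%:R).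
  apply: eq_bigr => j _.
  rewrite -scalemxAl -scalemxAr mul_delta_mx_cond pr_eq andbb scalerA !mxE.
  by rewrite mulmxnE mxE !eqxx eq_sym.
by rewrite (sum_delta_r (fun j => (v i 0)^* * v j 0)).
Qed.

End Emb.

Section Schmidt.
Variable C : numClosedFieldType.
Variable d : nat.
Local Notation pr := (@mxvec_index _ _).

Lemma ord1E (z : 'I_1) : z = 0.
Proof. exact: ord1. Qed.

Lemma kron_col (u w : 'cV[C]_d) (i j : 'I_d) (b : 'I_1) : kron u w (pr i j) b = u i 0 * w j 0.
Proof. by rewrite /kron mxE unpairK /= (ord1E (@unpair 1 1 b).1) (ord1E (@unpair 1 1 b).2). Qed.

Lemma dag_delta_col (i j : 'I_d) : (dag (delta_mx i 0 : 'cV[C]_d) *m (delta_mx j 0 : 'cV[C]_d)) 0 0 = (i == j)%:R.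
Proof. by rewrite dag_delta mul_delta_mx_cond mulmxnE mxE !eqxx. Qed.

Lemma emb_schmidt (v : 'cV[C]_d) : schmidt_rank_le (emb v) (sup_number v).
Proof.
set S := [set i | v i 0 != 0].
exists #|S|; split => //.
pose f := fun k : 'I_#|S| => enum_val k.
have fS k : v (f k) 0 != 0 by have := enum_valP k; rewrite inE.
have finj : injective f by exact: enum_val_inj.
have nzn k : `|v (f k) 0| != 0 by rewrite normr_eq0.
exists (fun k => `|v (f k) 0|),
       (fun k => (v (f k) 0 / `|v (f k) 0|) *: delta_mx (f k) 0),
       (fun k => delta_mx (f k) 0); split.
- by move=> k; rewrite normr_gt0.
- move=> k l; rewrite dagZ -scalemxAl -scalemxAr scalerA mxE dag_delta_col.
  rewrite (inj_eq finj); case: eqP => [->|_]; last by rewrite mulr0.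
  by rewrite mulr1 -normCKC normrM normfV normr_id divff // expr1n.
- by move=> k l; rewrite dag_delta_col (inj_eq finj).
rewrite /emb (bigID (fun i => i \in S)) /= [X in _ + X]big1 ?addr0; last first.
  by move=> i; rewrite inE negbK => /eqP ->; rewrite scale0r.
rewrite big_enum_val; apply: eq_bigr => k _.
rewrite kronZl kron_delta scalerA mulrCA divff // mulr1.
by congr (_ *: delta_mx _ _); exact: (esym (ord1E _)).
Qed.

Lemma schmidt_emb_le (v : 'cV[C]_d) r : schmidt_decomp (emb v) r -> (sup_number v <= r)%N.
Proof.
case=> lam [u [w [_ _ _ Ev]]].
pose D : 'M[C]_d := \matrix_(i, j) (if i == j then v i 0 else 0).
pose U : 'M[C]_(d, r) := \matrix_(i, k) u k i 0.
pose W : 'M[C]_(r, d) := \matrix_(k, j) (lam k * w k j 0).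
have DE : D = U *m W.
  apply/matrixP => i j; rewrite !mxE -emb_pr Ev summxE.
  apply: eq_bigr => k _; rewrite !mxE unpairK /= (ord1E (@unpair 1 1 0).1) (ord1E (@unpair 1 1 0).2).
  by rewrite mulrCA mulrA.
have rD : (\rank D <= r)%N by rewrite DE (leq_trans (mxrankM_maxl _ _)) // rank_leq_col.
apply: leq_trans rD.
set S := [set i | v i 0 != 0].
pose f := fun k : 'I_#|S| => enum_val k.
have fS k : v (f k) 0 != 0 by have := enum_valP k; rewrite inE.
have finj : injective f by exact: enum_val_inj.
pose P : 'M[C]_(#|S|, d) := \matrix_(k, i) (i == f k)%:R.
pose Q : 'M[C]_(d, #|S|) := \matrix_(i, k) (i == f k)%:R.
have SubE : P *m D *m Q = diag_mx (\row_k v (f k) 0).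
  apply/matrixP => k l; rewrite !mxE.
  transitivity (\sum_j D (f k) j * (j == f l)%:R).
    apply: eq_bigr => j _; rewrite !mxE; congr (_ * _).
    rewrite (eq_bigr (fun i => (f k == i)%:R * D i j)) => [|i _].
      by rewrite (sum_delta_l (fun i => D i j)) mxE.
    by rewrite !mxE eq_sym.
  rewrite (sum_delta_r (fun j => D (f k) j)) mxE (inj_eq finj).
  by case: eqP => [->|]; rewrite ?mulr1n ?mulr0n.
have uS : P *m D *m Q \in unitmx.
  rewrite unitmxE SubE det_diag unitfE prodf_seq_neq0.
  by apply/allP => k _; rewrite /= mxE fS.
rewrite /sup_number -/S -{1}(mxrank_unit uS).
by rewrite (leq_trans (mxrankM_maxl _ _)) // mxrankM_maxr.
Qed.

End Schmidt.

Section Main.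
Variable C : numClosedFieldType.
Variables (d : nat) (hd : (0 < d)%N).
Local Notation pr := (@mxvec_index _ _).

Lemma outer_entry n (v : 'cV[C]_n) a b : (v *m dag v) a b = v a 0 * (v b 0)^*.
Proof. by rewrite mxE big_ord1 dagE. Qed.

Lemma output_pr (rho : 'M[C]_d) i j : output hd rho (pr i i) (pr j j) = rho i j.
Proof.
rewrite outputE summxE.
transitivity (\sum_i' \sum_j' rho i' j' *+ ((i' == i) && (j' == j))).
  apply: eq_bigr => i' _; rewrite summxE; apply: eq_bigr => j' _.
  by rewrite !mxE !pr_eq !andbb mulr_natr (eq_sym i) (eq_sym j).
exact: (sum2_delta (fun i' j' => rho i' j')).
Qed.

Lemma output_off (rho : 'M[C]_d) a : (unpair a).1 != (unpair a).2 -> output hd rho a a = 0.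
Proof.
move=> na; rewrite outputE summxE; apply: big1 => i _; rewrite summxE.
apply: big1 => j _; rewrite !mxE eq_pr.
case: eqP => [ea|]; last by rewrite mulr0.
by move: na; rewrite ea eqxx.
Qed.

Lemma equivSN (rho : 'M[C]_d) k :
  sup_number_le rho k <-> schmidt_number_le (output hd rho) k.
Proof.
split.
  case=> N [p [psi [pp pu pP E]]].
  exists N, p, (fun l => emb (psi l)); split => //.
  - by move=> l; rewrite /unit_vec emb_unit; exact: pu.
  - move=> l; have [r [rle sd]] := emb_schmidt (psi l).
    by exists r; split => //; exact: leq_trans rle (pP l).
  have RE : \sum_(l < N) p l *: (emb (psi l) *m dag (emb (psi l))) =
     \sum_l \sum_(i < d) \sum_(j < d) (p l * (psi l i 0 * (psi l j 0)^*)) *: delta_mx (pr i i) (pr j j).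
    apply: eq_bigr => l _; rewrite emb_outer scaler_sumr; apply: eq_bigr => i _.
    by rewrite scaler_sumr; apply: eq_bigr => j _; rewrite scalerA.
  rewrite RE exchange_big outputE; apply: eq_bigr => i _.
  rewrite exchange_big; apply: eq_bigr => j _.
  by rewrite E summxE scaler_suml; apply: eq_bigr => l _; rewrite mxE outer_entry.
case=> N [p [Psi [pp pu pP E]]].
have zero l a : (unpair a).1 != (unpair a).2 -> Psi l a 0 = 0.
  move=> na; have := output_off rho na; rewrite E summxE => H.
  have nn : forall l', xpredT l' -> 0 <= (p l' *: (Psi l' *m dag (Psi l'))) a a.
    move=> l' _; rewrite mxE outer_entry; apply: mulr_ge0; first exact: ltW.
    exact: mul_conjC_ge0.
  have := psumr_eq0P nn H (i := l) isT; rewrite mxE outer_entry => /eqP.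
  by rewrite mulf_eq0 gt_eqF //= mul_conjC_eq0 => /eqP.
pose psi l : 'cV[C]_d := \col_i Psi l (pr i i) 0.
have PsiE l : Psi l = emb (psi l).
  apply/matrixP => a b; rewrite (ord1E b) emb_entry; case: ifP => [/eqP e|/negbT ne].
    by rewrite mxE {2}e unpairV.
  exact: zero.
exists N, p, psi; split => //.
- by move=> l; rewrite /unit_vec -emb_unit -PsiE; exact: pu.
- move=> l; have [r [rle sd]] := pP l; rewrite PsiE in sd.
  exact: leq_trans (schmidt_emb_le sd) rle.
apply/matrixP => i j; rewrite -output_pr E !summxE; apply: eq_bigr => l _.
by rewrite [LHS]mxE [RHS]mxE !outer_entry !mxE.
Qed.

End Main.

Section Final.
Variable C : numClosedFieldType.
Variables (d : nat) (hd : (0 < d)%N).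

Lemma single (v : 'cV[C]_d) : (sup_number v <= 1)%N -> exists i, v = v i 0 *: delta_mx i 0.
Proof.
move=> H; case: (pickP (fun i => v i 0 != 0)) => [i vi | none].
  exists i; apply/matrixP => a b; rewrite (ord1E b) !mxE eqxx andbT.
  case: (a =P i) => [->|na]; first by rewrite mulr1.
  rewrite mulr0; apply/eqP/negPn/negP => va; apply: na.
  by apply: (card_le1_eqP H); rewrite inE.
exists (Ordinal hd); apply/matrixP => a b.
by rewrite (ord1E b) !mxE; move/negbFE/eqP: (none a) => ->; move/negbFE/eqP: (none (Ordinal hd)) => ->; rewrite mul0r.
Qed.

Lemma tr1 (A : 'M[C]_1) : \tr A = A 0 0.
Proof. by rewrite /mxtrace big_ord1. Qed.

Lemma tr_outer n (M : 'M[C]_n) (v : 'cV[C]_n) : \tr (M *m (v *m dag v)) = (dag v *m M *m v) 0 0.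
Proof. by rewrite mulmxA mxtrace_mulC tr1 mulmxA. Qed.

Lemma quad_single n (M : 'M[C]_n) c i :
  dag (c *: (delta_mx i 0 : 'cV[C]_n)) *m M *m (c *: (delta_mx i 0 : 'cV[C]_n)) =
  (c^* * c) *: (dag (delta_mx i 0 : 'cV[C]_n) *m M *m (delta_mx i 0 : 'cV[C]_n)).
Proof. by rewrite dagZ -!scalemxAl -scalemxAr scalerA. Qed.

Lemma trace_lin m N (p : 'I_N -> C) (F : 'I_N -> 'M[C]_m) :
  \tr (\sum_l p l *: F l) = \sum_l p l * \tr (F l).
Proof.
rewrite /mxtrace (eq_bigr (fun i => \sum_l p l * F l i i)) => [|i _].
  by rewrite exchange_big; apply: eq_bigr => l _; rewrite mulr_sumr.
by rewrite summxE; apply: eq_bigr => l _; rewrite mxE.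
Qed.

End Final.

Unset Implicit Arguments.
Set Strict Implicit.

Theorem mainTheorem10 (C : numClosedFieldType) (d : nat) (hd : (0 < d)%N)
    (rho : 'M[C]_d) (Hrho : density rho) :
  (forall k : nat, is_SN (output hd rho) k <-> is_NS rho k) /\
  (entangled (output hd rho) <-> nonclassical rho) /\
  (forall M : 'M[C]_d, is_hermitian M ->
     (forall i : 'I_d, (dag (ket C i) *m M *m ket C i) 0 0 < \tr (M *m rho)) ->
     entangled (output hd rho)).
Proof.
split.
  move=> k; split.
    case=> [h1 h2]; split; first by apply/(equivSN hd).
    by move=> m /(equivSN hd); exact: h2.
  case=> [h1 h2]; split; first by apply/(equivSN hd).
  by move=> m /(equivSN hd); exact: h2.
split.
  by split => H1 H2; apply: H1; apply/(equivSN hd).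
move=> M _ Hlt /(equivSN hd) [N [p [psi [pp pu pP E]]]].
set t := \tr (M *m rho).
have key l : \tr (psi l *m dag (psi l)) = 1 /\ \tr (M *m (psi l *m dag (psi l))) < t.
  have [i ei] := single hd (pP l).
  have u := pu l; rewrite /unit_vec in u.
  have cc : (psi l i 0)^* * psi l i 0 = 1.
    have q := quad_single 1%:M (psi l i 0) i; rewrite !mulmx1 -ei in q.
    by move: u; rewrite q mxE dag_delta_col eqxx mulr1.
  split; first by rewrite mxtrace_mulC tr1.
  rewrite tr_outer ei quad_single cc scale1r.
  exact: Hlt i.
have sum1 : \sum_l p l = 1.
  case: Hrho => _; rewrite E trace_lin => <-.
  by apply: eq_bigr => l _; rewrite (proj1 (key l)) mulr1.
have sumt : \sum_l p l * \tr (M *m (psi l *m dag (psi l))) = t.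
  rewrite /t E mulmx_sumr (eq_bigr (fun l => p l *: (M *m (psi l *m dag (psi l))))) => [|l _].
    by rewrite trace_lin.
  exact: (esym (scalemxAr _ _ _)).
have z : \sum_l p l * (t - \tr (M *m (psi l *m dag (psi l)))) = 0.
  under eq_bigr => l _ do rewrite mulrBr.
  by rewrite sumrB sumt -mulr_suml sum1 mul1r subrr.
have pos l : 0 < p l * (t - \tr (M *m (psi l *m dag (psi l)))).
  by rewrite mulr_gt0 // subr_gt0 (proj2 (key l)).
case: N p psi pp pu pP E key sum1 sumt z pos => [|N] p psi pp pu pP E key sum1 sumt z pos.
  by move: sum1; rewrite big_ord0 => /eqP; rewrite eq_sym oner_eq0.
have := psumr_eq0P (P := xpredT) (fun l _ => ltW (pos l)) z (i := ord0) isT.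
by move/eqP; rewrite gt_eqF.
Qed.
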